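(* Let $q\in\mathbb C\setminus\{0\}$, let $\tau$ be a decorated ideal triangulation of $S$ with underlying ideal triangulation $\lambda$. The assignment $F_\tau(X_i)=q^{\delta_{\mu\nu}\sigma_{ts}}H^s_\mu H^t_\nu$, whenever the edge $\lambda_i$ bounds the $s$-side of $\tau_\mu$ and the $t$-side of $\tau_\nu$ (with $\delta$ the Kronecker delta), extends to an algebra homomorphism $F_\tau:\mathcal T^q_\lambda\to\mathcal K^q_\tau$.
   Context: Let $\bar S$ be a closed oriented surface of genus $g$, $S=\bar S\setminus\{v_1,\dots,v_p\}$, $p\ge1$, $m=2g-2+p>0$. A decorated ideal triangulation $\tau$ is an ideal triangulation $\lambda$ of $S$ (triangulation of $\bar S$ with vertex set exactly $\{v_1,\dots,v_p\}$; two sides of a triangle may lie on the same edge), with edges indexed $\lambda_1,\dots,\lambda_{3m}$, whose $2m$ triangles are numbered $\tau_1,\dots,\tau_{2m}$ and each has one marked corner. The sides of each triangle are numbered $0,1,2$ in counterclockwise order, the $0$-side being opposite the marked corner. The Kashaev algebra $\mathcal K^q_\tau$ is generated by $Y_\mu^{\pm1},Z_\mu^{\pm1}$ with relations $Y_\mu Y_\nu=Y_\nu Y_\mu$, $Z_\mu Z_\nu=Z_\nu Z_\mu$, $Y_\mu Z_\nu=Z_\nu Y_\mu$ ($\mu\ne\nu$), $Z_\mu Y_\mu=q^2Y_\mu Z_\mu$; set $H^0_\mu=Y_\mu Z_\mu^{-1}$, $H^1_\mu=Z_\mu$, $H^2_\mu=Y_\mu^{-1}$, and $\sigma_{st}$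 ($s,t\in\{0,1,2\}$) antisymmetric with $\sigma_{10}=\sigma_{02}=\sigma_{21}=1$ (when $\mu=\nu$ the formula for $F_\tau(X_i)$ does not depend on which side is called $s$). The Chekhov–Fock algebra $\mathcal T^q_\lambda$ is generated by $X_1^{\pm1},\dots,X_{3m}^{\pm1}$ with relations $X_iX_j=q^{2\sigma^\lambda_{ij}}X_jX_i$, where $\sigma^\lambda_{ij}=a^\lambda_{ij}-a^\lambda_{ji}$ and $a^\lambda_{ij}$ is the number of corners of triangles of $\lambda$ delimited on the left by $\lambda_i$ and on the right by $\lambda_j$; here a corner lying between two sides of a triangle that are consecutive in the counterclockwise order of its sides is regarded as delimited on the right by the earlier side and on the left by the later side (equivalently, each triangle whose $0,1,2$-sides lie on $\lambda_a,\lambda_b,\lambda_c$ contributes $\sigma_{st}$ to $\sigma^\lambda$ for the pair of edges on its $s$- and $t$-sides). *)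

(* Defs.v *)
From HB Require Import structures.
From mathcomp Require Import all_boot all_order all_algebra.
Set Implicit Arguments. Unset Strict Implicit. Unset Printing Implicit Defensive.
Import Order.TTheory GRing.Theory Num.Theory.
Local Open Scope ring_scope.

(* Triangles tau_1..tau_{2m} are 'I_(2*m), edges lambda_1..lambda_{3m}     *)
(* are 'I_(3*m); sides of a triangle are numbered 0,1,2 ('I_3) in         *)
(* counterclockwise order, the 0-side being opposite the marked corner.   *)
(* Each edge is bounded by exactly two sides (of possibly the same        *)
(* triangle).  Gluing the oriented triangles along paired sides           *)
(* (orientation-reversingly) produces the closed oriented surface.        *)
Record dtri (m : nat) := DTri {
  dt_side : 'I_(2 * m) -> 'I_3 -> 'I_(3 * m);
  dt_two : forall i : 'I_(3 * m),
      #|[set ms : 'I_(2 * m) * 'I_3 | dt_side ms.1 ms.2 == i]| = 2%N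
}.

Definition nxt (s : 'I_3) : 'I_3 := ordS s.

(* Corners: (mu, c) is the corner of tau_mu opposite its c-side.  In ccw  *)
(* order the s-side runs from corner (s+1) to corner (s+2).  Gluing the   *)
(* s-side of tau_mu to the t-side of tau_nu reverses orientation, so      *)
(* corner s+1 of mu is identified with corner t+2 of nu and corner s+2 of *)
(* mu with corner t+1 of nu.                                              *)
Definition corner_glue m (tau : dtri m) : rel ('I_(2 * m) * 'I_3) :=
  fun c1 c2 =>
  [exists mu : 'I_(2 * m), exists s : 'I_3, exists nu : 'I_(2 * m),
   exists t : 'I_3,
     [&& (mu, s) != (nu, t), dt_side tau mu s == dt_side tau nu t &
       (((c1 == (mu, nxt s)) && (c2 == (nu, nxt (nxt t)))) ||
        ((c1 == (mu, nxt (nxt s))) && (c2 == (nu, nxt t))))]].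

(* number of vertices (punctures) of the triangulation: classes of corners *)
Definition nverts m (tau : dtri m) : nat :=
  n_comp (corner_glue tau) predT.

Definition tri_adj m (tau : dtri m) : rel 'I_(2 * m) :=
  fun mu nu => [exists s : 'I_3, exists t : 'I_3,
                  dt_side tau mu s == dt_side tau nu t].

Definition tri_connected m (tau : dtri m) : Prop :=
  forall mu nu, connect (tri_adj tau) mu nu.

(* a^lambda_{ij}: number of corners delimited on the left by lambda_i and *)
(* on the right by lambda_j; the corner between the consecutive sides s   *)
(* and s+1 is delimited on the right by side s and on the left by s+1.    *)
Definition a_lam m (tau : dtri m) (i j : 'I_(3 * m)) : nat :=
  (\sum_(mu : 'I_(2 * m)) \sum_(s : 'I_3)
     ((dt_side tau mu (nxt s) == i) && (dt_side tau mu s == j)))%N.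

Definition sigma_lam m (tau : dtri m) (i j : 'I_(3 * m)) : int :=
  (a_lam tau i j)%:Z - (a_lam tau j i)%:Z.

Definition sigma3 (s t : 'I_3) : int :=
  if s == nxt t then 1 else if t == nxt s then -1 else 0.

Definition is_presentation (k : fieldType) (I : Type) (A : algType k)
  (gens : I -> A) (R : forall B : algType k, (I -> B) -> Prop) : Prop :=
  R A gens /\
  forall (B : algType k) (y : I -> B), R B y ->
    (exists f : {lrmorphism A -> B}, forall i, f (gens i) = y i) /\
    (forall f f' : {lrmorphism A -> B},
       (forall i, f (gens i) = y i) -> (forall i, f' (gens i) = y i) ->
       forall a, f a = f' a).

(* Chekhov-Fock algebra: generators (true, i) = X_i, (false, i) = X_i^-1 *)
Definition CF_rel (k : fieldType) (q : k) m (tau : dtri m)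
  (B : algType k) (x : bool * 'I_(3 * m) -> B) : Prop :=
  (forall i, x (true, i) * x (false, i) = 1 /\ x (false, i) * x (true, i) = 1) /\
  (forall i j, x (true, i) * x (true, j)
               = (q ^ (2 * sigma_lam tau i j)) *: (x (true, j) * x (true, i))).

(* Kashaev algebra: generators (e, (true, mu)) = Y_mu^(+-1),              *)
(* (e, (false, mu)) = Z_mu^(+-1), exponent +1 iff e = true.               *)
Definition Yk (B : Type) N (w : bool * (bool * 'I_N) -> B) mu := w (true, (true, mu)).
Definition Yik (B : Type) N (w : bool * (bool * 'I_N) -> B) mu := w (false, (true, mu)).
Definition Zk (B : Type) N (w : bool * (bool * 'I_N) -> B) mu := w (true, (false, mu)).
Definition Zik (B : Type) N (w : bool * (bool * 'I_N) -> B) mu := w (false, (false, mu)).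

Definition kashaev_rel (k : fieldType) (q : k) (N : nat)
  (B : algType k) (w : bool * (bool * 'I_N) -> B) : Prop :=
  (forall mu, Yk w mu * Yik w mu = 1 /\ Yik w mu * Yk w mu = 1 /\
              Zk w mu * Zik w mu = 1 /\ Zik w mu * Zk w mu = 1) /\
  (forall mu nu, Yk w mu * Yk w nu = Yk w nu * Yk w mu) /\
  (forall mu nu, Zk w mu * Zk w nu = Zk w nu * Zk w mu) /\
  (forall mu nu, mu != nu -> Yk w mu * Zk w nu = Zk w nu * Yk w mu) /\
  (forall mu, Zk w mu * Yk w mu = (q ^+ 2) *: (Yk w mu * Zk w mu)).

Definition Hk (B : nzRingType) N (w : bool * (bool * 'I_N) -> B)
  (s : 'I_3) (mu : 'I_N) : B :=
  if val s == 0%N then Yk w mu * Zik w mu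
  else if val s == 1%N then Zk w mu else Yik w mu.

(* Main.v *)
Require Import Defs.
From HB Require Import structures.
From mathcomp Require Import all_boot all_order all_algebra.
From mathcomp Require Import ring.
Import Order.TTheory GRing.Theory Num.Theory.
Set Implicit Arguments. Unset Strict Implicit. Unset Printing Implicit Defensive.
Local Open Scope ring_scope.

Definition commz (k : fieldType) (q : k) (K : algType k) (e : int) (a b : K) :=
  a * b = (q ^ e) *: (b * a).

Lemma cz_sym (k : fieldType) (q : k) (K : algType k) e (a b : K) :
  q != 0 -> commz q e a b -> commz q (- e) b a.
Proof.
move=> hq H; rewrite /commz H scalerA -expfzDr // addNr expr0z scale1r //.
Qed.

Lemma cz_invl (k : fieldType) (q : k) (K : algType k) e (a ai b : K) :
  q != 0 -> ai * a = 1 -> a * ai = 1 -> commz q e a b -> commz q (- e) ai b.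
Proof.
move=> hq h1 h2 H; have Hs := cz_sym hq H.
rewrite /commz -[ai * b]mulr1 -h2 mulrA -(mulrA ai b a) Hs -scalerAr -scalerAl.
by rewrite !mulrA h1 mul1r.
Qed.

Lemma cz_invr (k : fieldType) (q : k) (K : algType k) e (a b bi : K) :
  q != 0 -> bi * b = 1 -> b * bi = 1 -> commz q e a b -> commz q (- e) a bi.
Proof.
move=> hq h1 h2 H; rewrite -[e]opprK; apply: cz_sym => //.
by apply: (cz_invl hq h1 h2); apply: cz_sym.
Qed.

Lemma cz_mulr (k : fieldType) (q : k) (K : algType k) e1 e2 e (a b c : K) :
  q != 0 -> commz q e1 a b -> commz q e2 a c -> e = e1 + e2 ->
  commz q e a (b * c).
Proof.
move=> hq H1 H2 ->; rewrite /commz.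
have -> : a * (b * c) = q ^ e1 *: (b * (a * c)) by rewrite mulrA H1 -scalerAl mulrA.
by rewrite H2 -scalerAr scalerA -expfzDr // mulrA.
Qed.

Lemma cz_mull (k : fieldType) (q : k) (K : algType k) e1 e2 e (a b c : K) :
  q != 0 -> commz q e1 a c -> commz q e2 b c -> e = e1 + e2 ->
  commz q e (a * b) c.
Proof.
move=> hq H1 H2 ->; rewrite /commz.
have -> : a * b * c = q ^ e2 *: ((a * c) * b) by rewrite -mulrA H2 -scalerAr mulrA.
by rewrite H1 -scalerAl scalerA -expfzDr // addrC mulrA.
Qed.

Lemma cz_scalel (k : fieldType) (q : k) (K : algType k) e r (a b : K) :
  commz q e a b -> commz q e (r *: a) b.
Proof. by move=> H; rewrite /commz -scalerAl H -scalerAr !scalerA mulrC. Qed.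

Lemma cz_scaler (k : fieldType) (q : k) (K : algType k) e r (a b : K) :
  commz q e a b -> commz q e a (r *: b).
Proof. by move=> H; rewrite /commz -scalerAr H -scalerAl !scalerA mulrC. Qed.

Definition ey N (g : bool * (bool * 'I_N)) : int :=
  if g.2.1 then (if g.1 then 1 else -1) else 0.
Definition ez N (g : bool * (bool * 'I_N)) : int :=
  if g.2.1 then 0 else (if g.1 then 1 else -1).
Definition kg N (g h : bool * (bool * 'I_N)) : int :=
  if g.2.2 == h.2.2 then 2 * (ez g * ey h - ey g * ez h) else 0.

Lemma gen_comm_tt (k : fieldType) (q : k) (hq : q != 0) N (K : algType k)
  (w : bool * (bool * 'I_N) -> K) (hK : kashaev_rel q w) b mu b' nu :
  commz q (kg (true, (b, mu)) (true, (b', nu))) (w (true, (b, mu))) (w (true, (b', nu))).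
Proof.
case: hK => _ [hY [hZ [hYZ hZY]]].
rewrite /kg /=; case: eqP => [<-|/eqP hne].
  case: b; case: b' => /=; rewrite /commz ?expr0z ?scale1r.
  - exact: hY.
  - exact: (@cz_sym _ q K 2 _ _ hq (hZY mu)).
  - exact: (hZY mu).
  - exact: hZ.
case: b; case: b' => /=; rewrite /commz ?expr0z ?scale1r.
- exact: hY.
- exact: hYZ.
- by apply/esym/hYZ; rewrite eq_sym.
- exact: hZ.
Qed.

Lemma kg_flipl N (b : bool) (mu : 'I_N) h :
  kg (false, (b, mu)) h = - kg (true, (b, mu)) h.
Proof.
case: h => e' [b' nu]; rewrite /kg /ey /ez /=.
by case: (_ == _); case: b; case: b'; case: e'.
Qed.

Lemma kg_flipr N g (b : bool) (mu : 'I_N) :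
  kg g (false, (b, mu)) = - kg g (true, (b, mu)).
Proof.
case: g => e' [b' nu]; rewrite /kg /ey /ez /=.
by case: (_ == _); case: b; case: b'; case: e'.
Qed.

Lemma kinv (k : fieldType) (q : k) N (K : algType k)
  (w : bool * (bool * 'I_N) -> K) (hK : kashaev_rel q w) b mu :
  w (false, (b, mu)) * w (true, (b, mu)) = 1 /\ w (true, (b, mu)) * w (false, (b, mu)) = 1.
Proof. by case: hK => /(_ mu) [h1 [h2 [h3 h4]]] _; case: b. Qed.

Lemma gen_comm (k : fieldType) (q : k) (hq : q != 0) N (K : algType k)
  (w : bool * (bool * 'I_N) -> K) (hK : kashaev_rel q w) g h :
  commz q (kg g h) (w g) (w h).
Proof.
case: g => e [b mu]; case: h => e' [b' nu].
case: e; case: e'.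
- exact: gen_comm_tt.
- rewrite kg_flipr; have [h1 h2] := kinv hK b' nu.
  exact: (cz_invr hq h1 h2 (gen_comm_tt hq hK _ _ _ _)).
- rewrite kg_flipl; have [h1 h2] := kinv hK b mu.
  exact: (cz_invl hq h1 h2 (gen_comm_tt hq hK _ _ _ _)).
- rewrite kg_flipl kg_flipr opprK.
  have [h1 h2] := kinv hK b mu; have [h3 h4] := kinv hK b' nu.
  rewrite -[kg _ _]opprK; apply: (cz_invl hq h1 h2).
  exact: (cz_invr hq h3 h4 (gen_comm_tt hq hK _ _ _ _)).
Qed.

Definition kap N (a b : 'I_N * 'I_3) : int :=
  if a.1 == b.1 then sigma3 a.2 b.2 else 0.

Lemma gen_comm' (k : fieldType) (q : k) (hq : q != 0) N (K : algType k)
  (w : bool * (bool * 'I_N) -> K) (hK : kashaev_rel q w) e g h :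
  e = kg g h -> commz q e (w g) (w h).
Proof. by move=> ->; apply: gen_comm. Qed.

Ltac czs hq hK :=
  repeat first [ apply: (cz_mull hq) | apply: (cz_mulr hq) | (apply: (gen_comm' hq hK); try reflexivity) ].

Lemma Hcomm (k : fieldType) (q : k) (hq : q != 0) N (K : algType k)
  (w : bool * (bool * 'I_N) -> K) (hK : kashaev_rel q w) mu s nu t :
  commz q (2 * kap (mu, s) (nu, t)) (Hk w s mu) (Hk w t nu).
Proof.
case: s => [[|[|[|s']]] Hs] //; case: t => [[|[|[|t']]] Ht] //;
rewrite /Hk /Yk /Zk /Yik /Zik /=; czs hq hK.
all: rewrite /kap /kg /ey /ez /sigma3 /nxt /=.
all: try match goal with |- ?x = _ => is_evar x; reflexivity end.
all: by case: (mu == nu).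
Qed.

Lemma sigma3_anti s t : sigma3 t s = - sigma3 s t.
Proof.
by case: s => [[|[|[|s']]] Hs] //; case: t => [[|[|[|t']]] Ht] //;
  rewrite /sigma3 /nxt /=.
Qed.

Definition Eel (k : fieldType) (q : k) N (K : algType k)
  (w : bool * (bool * 'I_N) -> K) (a b : 'I_N * 'I_3) : K :=
  q ^ (if a.1 == b.1 then sigma3 b.2 a.2 else 0) *: (Hk w a.2 a.1 * Hk w b.2 b.1).

Definition Hinv (B : nzRingType) N (w : bool * (bool * 'I_N) -> B)
  (s : 'I_3) (mu : 'I_N) : B :=
  if val s == 0%N then Zk w mu * Yik w mu
  else if val s == 1%N then Zik w mu else Yk w mu.

Definition Einv (k : fieldType) (q : k) N (K : algType k)
  (w : bool * (bool * 'I_N) -> K) (a b : 'I_N * 'I_3) : K :=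
  q ^ (- (if a.1 == b.1 then sigma3 b.2 a.2 else 0)) *: (Hinv w b.2 b.1 * Hinv w a.2 a.1).

Lemma Hcomm2 (k : fieldType) (q : k) (hq : q != 0) N (K : algType k)
  (w : bool * (bool * 'I_N) -> K) (hK : kashaev_rel q w) a b :
  commz q (2 * kap a b) (Hk w a.2 a.1) (Hk w b.2 b.1).
Proof. case: a => mu s; case: b => nu t; exact: Hcomm. Qed.

Lemma Ecomm (k : fieldType) (q : k) (hq : q != 0) N (K : algType k)
  (w : bool * (bool * 'I_N) -> K) (hK : kashaev_rel q w) a b c d :
  commz q (2 * (kap a c + kap a d + kap b c + kap b d)) (Eel q w a b) (Eel q w c d).
Proof.
apply: cz_scalel; apply: cz_scaler.
apply: (cz_mull hq).
- apply: (cz_mulr hq); [exact: Hcomm2 | exact: Hcomm2 | reflexivity].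
- apply: (cz_mulr hq); [exact: Hcomm2 | exact: Hcomm2 | reflexivity].
- ring.
Qed.

Lemma Esym (k : fieldType) (q : k) (hq : q != 0) N (K : algType k)
  (w : bool * (bool * 'I_N) -> K) (hK : kashaev_rel q w) a b :
  Eel q w a b = Eel q w b a.
Proof.
rewrite /Eel (Hcomm2 hq hK a b) scalerA -expfzDr // /kap eq_sym.
case: (b.1 == a.1) => //.
by rewrite sigma3_anti; congr (q ^ _ *: _); ring.
Qed.

Lemma Hinv_l (k : fieldType) (q : k) N (K : algType k)
  (w : bool * (bool * 'I_N) -> K) (hK : kashaev_rel q w) s mu :
  Hk w s mu * Hinv w s mu = 1 /\ Hinv w s mu * Hk w s mu = 1.
Proof.
case: hK => /(_ mu) [h1 [h2 [h3 h4]]] _.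
rewrite /Hk /Hinv; case: ifP => _; last case: ifP => _ //.
by rewrite -mulrA (mulrA (Zik w mu)) h4 mul1r h1 -mulrA (mulrA (Yik w mu)) h2 mul1r h3.
Qed.

Lemma Einv_ok (k : fieldType) (q : k) (hq : q != 0) N (K : algType k)
  (w : bool * (bool * 'I_N) -> K) (hK : kashaev_rel q w) a b :
  Eel q w a b * Einv q w a b = 1 /\ Einv q w a b * Eel q w a b = 1.
Proof.
have [ha1 ha2] := Hinv_l hK a.2 a.1; have [hb1 hb2] := Hinv_l hK b.2 b.1.
rewrite /Eel /Einv -!scalerAl -!scalerAr !scalerA -!expfzDr // addrN addNr expr0z !scale1r.
split.
- by rewrite -mulrA (mulrA (Hk w b.2 b.1)) hb1 mul1r ha1.
- by rewrite -mulrA (mulrA (Hinv w a.2 a.1)) ha2 mul1r hb2.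
Qed.
Definition o0 : 'I_3 := @Ordinal 3 0 isT.
Definition o1 : 'I_3 := @Ordinal 3 1 isT.
Definition o2 : 'I_3 := @Ordinal 3 2 isT.

Lemma sum3 (F : 'I_3 -> int) : \sum_(s < 3) F s = F o0 + F o1 + F o2.
Proof.
rewrite !big_ord_recl big_ord0 addr0 addrA.
by congr (F _ + F _ + F _); apply: val_inj.
Qed.
Lemma nxt0 : nxt o0 = o1. Proof. exact: val_inj. Qed.
Lemma nxt1 : nxt o1 = o2. Proof. exact: val_inj. Qed.
Lemma nxt2 : nxt o2 = o0. Proof. exact: val_inj. Qed.

Lemma tri_ident (f g : 'I_3 -> bool) :
  \sum_s (if f s then \sum_t (if g t then sigma3 s t else 0) else 0) =
  \sum_s ((f (nxt s) && g s) : int) - \sum_s ((g (nxt s) && f s) : int).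
Proof.
rewrite !sum3 nxt0 nxt1 nxt2.
by case: (f o0); case: (f o1); case: (f o2); case: (g o0); case: (g o1); case: (g o2).
Qed.

Lemma sum_kap m (tau : dtri m) i j :
  sigma_lam tau i j =
  \sum_(a in [set ms : 'I_(2 * m) * 'I_3 | dt_side tau ms.1 ms.2 == i])
    \sum_(b in [set ms : 'I_(2 * m) * 'I_3 | dt_side tau ms.1 ms.2 == j]) kap a b.
Proof.
have inner : forall a : 'I_(2 * m) * 'I_3,
  \sum_(b in [set ms : 'I_(2 * m) * 'I_3 | dt_side tau ms.1 ms.2 == j]) kap a b =
  \sum_t (if dt_side tau a.1 t == j then sigma3 a.2 t else 0).
  move=> a.
  transitivity (\sum_nu \sum_t (if dt_side tau nu t == j then kap a (nu,t) else 0)).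
    rewrite (pair_bigA _ (fun nu t => if dt_side tau nu t == j then kap a (nu,t) else 0)) /=.
    rewrite -big_mkcond; apply: eq_big => [b|[nu t] _]; by rewrite ?inE.
  rewrite (bigD1 a.1) //= [X in _ + X]big1 ?addr0.
    by apply: eq_bigr => t _; rewrite /kap /= eqxx.
  move=> nu /= hne; apply: big1 => t _; rewrite /kap /=; move: hne; rewrite eq_sym => /negbTE ->.
  by case: ifP.
under eq_bigr do rewrite inner.
transitivity (\sum_mu \sum_s (if dt_side tau mu s == i then \sum_t (if dt_side tau mu t == j then sigma3 s t else 0) else 0)); last first.
  rewrite (pair_bigA _ (fun mu s => if dt_side tau mu s == i then \sum_t (if dt_side tau mu t == j then sigma3 s t else 0) else 0)) /=.
  rewrite -big_mkcond; apply: eq_big => [b|[mu s] _]; by rewrite ?inE.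
rewrite /sigma_lam /a_lam !(big_morph Posz PoszD (erefl _)) -sumrB.
apply: eq_bigr => mu _.
rewrite !(big_morph Posz PoszD (erefl _)).
by rewrite (tri_ident (fun s => dt_side tau mu s == i) (fun t => dt_side tau mu t == j)).
Qed.

Lemma seq2 (T : Type) (d : T) (s : seq T) : size s = 2%N -> s = [:: nth d s 0; nth d s 1].
Proof. by case: s => [|x [|y [|]]]. Qed.

Theorem lemma5p2 (k : fieldType) (q : k) (hq : q != 0)
  (g p m : nat) (hp : (0 < p)%N) (hm : (m + 2 = 2 * g + p)%N) (hm0 : (0 < m)%N)
  (tau : dtri m) (hconn : tri_connected tau) (hverts : nverts tau = p)
  (T K : algType k) (x : bool * 'I_(3 * m) -> T)
  (w : bool * (bool * 'I_(2 * m)) -> K)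
  (hT : is_presentation x (CF_rel q tau))
  (hK : is_presentation w (@kashaev_rel k q (2 * m))) :
  exists F : {lrmorphism T -> K},
    forall (i : 'I_(3 * m)) (mu nu : 'I_(2 * m)) (s t : 'I_3),
      (mu, s) != (nu, t) -> dt_side tau mu s = i -> dt_side tau nu t = i ->
      F (x (true, i)) =
        (q ^ (if mu == nu then sigma3 t s else 0)) *: (Hk w s mu * Hk w t nu).
Proof.
have hK' := hK.1.
have h2m : (0 < 2 * m)%N by rewrite muln_gt0.
pose d : 'I_(2 * m) * 'I_3 := (Ordinal h2m, o0).
pose S (i : 'I_(3 * m)) := [set ms : 'I_(2 * m) * 'I_3 | dt_side tau ms.1 ms.2 == i].
pose e1 i := nth d (enum (S i)) 0.
pose e2 i := nth d (enum (S i)) 1.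
have Een : forall i, enum (S i) = [:: e1 i; e2 i].
  by move=> i; apply: seq2; rewrite -cardE; exact: dt_two.
have Esum : forall i (F : 'I_(2 * m) * 'I_3 -> int),
    \sum_(a in S i) F a = F (e1 i) + F (e2 i).
  by move=> i F; rewrite -big_enum Een big_cons big_seq1.
pose y (bi : bool * 'I_(3 * m)) : K :=
  if bi.1 then Eel q w (e1 bi.2) (e2 bi.2) else Einv q w (e1 bi.2) (e2 bi.2).
have hy : CF_rel q tau y.
  split.
    by move=> i; rewrite /y /=; have [h1 h2] := Einv_ok hq hK' (e1 i) (e2 i).
  move=> i j; rewrite /y /= sum_kap Esum !Esum.
  have := Ecomm hq hK' (e1 i) (e2 i) (e1 j) (e2 j); rewrite /commz => ->.
  by congr (q ^ _ *: _); ring.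
have [[F hF] _] := hT.2 K y hy.
exists F => i mu nu s t hne hs ht.
rewrite hF /y /=.
have mem : forall a, dt_side tau a.1 a.2 = i -> (a == e1 i) || (a == e2 i).
  move=> a ha; have : a \in enum (S i) by rewrite mem_enum inE ha.
  by rewrite Een !inE.
have hne12 : e1 i != e2 i.
  by have := enum_uniq (S i); rewrite Een /= inE andbT.
move: (mem (mu, s) hs) (mem (nu, t) ht) hne12 hne.
case/orP => /eqP <-; case/orP => /eqP <- //; rewrite ?eqxx //.
by move=> _ _; rewrite Esym.
Qed.
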